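(* Assume the recursive Laplacians $\mathbf{L}^{(H)}$ and operators $\mathbf{M}^{(H)}$ below, and suppose that for every non-root node $D$, $\widetilde{\mathrm{SC}}(\mathbf{L}^{(D)},\partial D)\approx_{\epsilon}\mathrm{SC}(\mathbf{L}^{(D)},\partial D)$. Then for every node $H$ at level $i$ of $\mathcal{T}$ and every vector $\mathbf{z}$, \[\|\mathbf{M}^{(H)}\mathbf{z}\|_2^2\le e^{i\epsilon}\,\mathbf{z}^\top\mathbf{L}^{(H)}\mathbf{z}=e^{i\epsilon}\,\mathcal{E}_{\mathbf{L}^{(H)}}(\mathbf{L}^{(H)}\mathbf{z}).\]
   Context: Setup. $G=(V,E)$ is a connected undirected graph with positive edge weights, $\mathbf{W}=\mathrm{diag}(\mathbf{w})$, signed incidence matrix $\mathbf{B}\in\mathbb{R}^{E\times V}$; for a region (edge-induced subgraph) $H$, $\mathbf{B}[H]$ is $\mathbf{B}$ with rows of edges not in $E(H)$ set to zero. All matrices/vectors are padded with zeros to $V$- or $E$-indexed dimensions; $\mathbf{M}^{-1}$ is the Moore–Penrose pseudoinverse; $\mathbf{A}\approx_t\mathbf{B}$ means $e^{-t}\mathbf{A}\preceq\mathbf{B}\preceq e^{t}\mathbf{A}$; for a Laplacian $\mathbf{L}$ supported on $U$ and $C\subseteq U$, $F=U\setminus C$, $\mathrm{SC}(\mathbf{L},C)=\mathbf{L}_{C,C}-\mathbf{L}_{C,F}\mathbf{L}_{F,F}^{-1}\mathbf{L}_{F,C}$; energy $\mathcal{E}_{\mathbf{L}}(\mathbf{d})=\mathbf{d}^\top\mathbf{L}^{-1}\mathbf{d}$.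 $\mathcal{T}$ is a separator tree of $G$: a rooted binary tree of regions $H$ with vertex sets $\partial H$, $S(H)$, $F_H$, where the root is $G$ with $\partial G=\emptyset$, $F_G=S(G)$; a non-leaf node $H$ has two children $D_1,D_2$ whose edge sets partition $E(H)$ with $V(D_1)\cap V(D_2)=S(H)$, $\partial D_j=(\partial H\cup S(H))\cap V(D_j)$, $F_H=S(H)\setminus\partial H$; a leaf has constantly many edges, $S(H)=\emptyset$, $F_H=V(H)\setminus\partial H$. The level of a node is the maximum number of edges on a tree path from it down to a descendant (leaves have level 0). Recursive Laplacians. For a leaf $H$, $\mathbf{L}^{(H)}=\mathbf{B}[H]^\top\mathbf{W}\mathbf{B}[H]$. For each node $D$ we are given a Laplacian $\widetilde{\mathrm{SC}}(\mathbf{L}^{(D)},\partial D)$ supported on $\partial D$; for a non-leaf $H$ with children $D_1,D_2$, $\mathbf{L}^{(H)}=\widetilde{\mathrm{SC}}(\mathbf{L}^{(D_1)},\partial D_1)+\widetilde{\mathrm{SC}}(\mathbf{L}^{(D_2)},\partial D_2)$. Assume each $\mathbf{L}^{(H)}$ is the Laplacian of a connected graph on vertex set $\partial H\cup F_H$. Operators. For a node $D$ with parent $P$, the edge operator is $\mathbf{M}_{(D,P)}=(\mathbf{L}^{(D)})^{-1}\widetilde{\mathrm{SC}}(\mathbf{L}^{(D)},\partial D)$. Define $\mathbf{M}^{(H)}=\mathbf{W}^{1/2}\mathbf{B}[H]$ for a leaf $H$, and $\mathbf{M}^{(H)}=\mathbf{M}^{(D_1)}\mathbf{M}_{(D_1,H)}+\mathbf{M}^{(D_2)}\mathbf{M}_{(D_2,H)}$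 for a non-leaf $H$ with children $D_1,D_2$. *)

(* Defs.v *)
From HB Require Import structures.
From mathcomp Require Import all_boot all_order all_algebra.
From mathcomp Require classical_sets.
From mathcomp Require Import boolp reals sequences exp.
Set Implicit Arguments.
Unset Strict Implicit.
Unset Printing Implicit Defensive.
Import Order.TTheory GRing.Theory Num.Theory.
Local Open Scope ring_scope.

Section Defs.
Variable R : realType.

Definition qf n (A : 'M[R]_n) (x : 'cV[R]_n) : R := ((x^T *m A *m x) 0 0).

Definition sqnorm m (v : 'cV[R]_m) : R := \sum_(i < m) (v i 0) ^+ 2.

Definition loewner_le n (A B : 'M[R]_n) : Prop := forall x, qf A x <= qf B x.

Definition approx n (t : R) (A B : 'M[R]_n) : Prop :=
  loewner_le (expR (- t) *: A) B /\ loewner_le B (expR t *: A).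

Definition penrose n (A X : 'M[R]_n) : Prop :=
  [/\ A *m X *m A = A, X *m A *m X = X, (A *m X)^T = A *m X & (X *m A)^T = X *m A].
Definition pinv n (A : 'M[R]_n) : 'M[R]_n := classical_sets.xget 0 (fun X => penrose A X).

Definition energy n (L : 'M[R]_n) (d : 'cV[R]_n) : R := qf (pinv L) d.

(* diagonal 0/1 projector onto a vertex set (used to express zero-padded blocks) *)
Definition proj n (S : {set 'I_n}) : 'M[R]_n :=
  diag_mx (\row_i (if i \in S then 1 else 0)).

(* Schur complement SC(L, C) for L supported on U, F = U \ C, all blocks padded
   with zeros to V x V:  L_CC - L_CF L_FF^{-1} L_FC *)
Definition SC n (L : 'M[R]_n) (U C : {set 'I_n}) : 'M[R]_n :=
  let F := U :\: C in
  proj C *m L *m proj C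
  - (proj C *m L *m proj F) *m pinv (proj F *m L *m proj F) *m (proj F *m L *m proj C).

Definition is_laplacian n (A : 'M[R]_n) : Prop :=
  [/\ A^T = A, (forall i j, i != j -> A i j <= 0) & (forall i, \sum_j A i j = 0)].
Definition supported_on n (A : 'M[R]_n) (U : {set 'I_n}) : Prop :=
  forall i j, (i \notin U) || (j \notin U) -> A i j = 0.
Definition lap_graph n (A : 'M[R]_n) (U : {set 'I_n}) : rel 'I_n :=
  fun x y => [&& x \in U, y \in U, x != y & A x y < 0].
Definition connected_on n (A : 'M[R]_n) (U : {set 'I_n}) : Prop :=
  forall u v, u \in U -> v \in U -> connect (lap_graph A U) u v.
Definition laplacian_on n (A : 'M[R]_n) (U : {set 'I_n}) : Prop :=
  is_laplacian A /\ supported_on A U.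
Definition conn_laplacian_on n (A : 'M[R]_n) (U : {set 'I_n}) : Prop :=
  laplacian_on A U /\ connected_on A U.

(* vertices 'I_n, edges 'I_m; edge e joins tl e and hd e (arbitrary orientation) *)

Definition incidence n m (tl hd : 'I_m -> 'I_n) : 'M[R]_(m, n) :=
  \matrix_(e, v) ((v == hd e)%:R - (v == tl e)%:R).

Definition incidence_on n m (tl hd : 'I_m -> 'I_n) (Es : {set 'I_m}) : 'M[R]_(m, n) :=
  \matrix_(e, v) (if e \in Es then incidence tl hd e v else 0).

Definition Wmx m (w : 'I_m -> R) : 'M[R]_m := diag_mx (\row_e w e).
Definition Wsqrt m (w : 'I_m -> R) : 'M[R]_m := diag_mx (\row_e Num.sqrt (w e)).

Definition vset n m (tl hd : 'I_m -> 'I_n) (Es : {set 'I_m}) : {set 'I_n} :=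
  [set v | [exists e in Es, (v == tl e) || (v == hd e)]].

Definition graph_adj n m (tl hd : 'I_m -> 'I_n) : rel 'I_n :=
  fun u v => [exists e, ((tl e == u) && (hd e == v)) || ((tl e == v) && (hd e == u))].
Definition graph_connected n m (tl hd : 'I_m -> 'I_n) : Prop :=
  forall u v, connect (graph_adj tl hd) u v.

(* A node stores its edge set E(H), boundary dH, (for non-leaves) separator S(H),
   and the given Laplacian  SC~(L^(H), dH). *)
Inductive stree (n m : nat) : Type :=
| SLeaf (Es : {set 'I_m}) (bd : {set 'I_n}) (sct : 'M[R]_n)
| SNode (Es : {set 'I_m}) (bd : {set 'I_n}) (S : {set 'I_n}) (sct : 'M[R]_n)
        (l r : stree n m).

Variables (n m : nat) (tl hd : 'I_m -> 'I_n) (w : 'I_m -> R).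

Definition st_edges (T : stree n m) := match T with SLeaf Es _ _ => Es | SNode Es _ _ _ _ _ => Es end.
Definition st_bd (T : stree n m) := match T with SLeaf _ bd _ => bd | SNode _ bd _ _ _ _ => bd end.
Definition st_sct (T : stree n m) := match T with SLeaf _ _ s => s | SNode _ _ _ s _ _ => s end.
Definition st_sep (T : stree n m) : {set 'I_n} :=
  match T with SLeaf _ _ _ => set0 | SNode _ _ Sp _ _ _ => Sp end.
Definition st_V (T : stree n m) := vset tl hd (st_edges T).
Definition st_F (T : stree n m) : {set 'I_n} :=
  match T with
  | SLeaf Es bd _ => vset tl hd Es :\: bd
  | SNode _ bd Sp _ _ _ => Sp :\: bd
  end.

Fixpoint st_level (T : stree n m) : nat :=
  match T with SLeaf _ _ _ => 0%N | SNode _ _ _ _ l r => (maxn (st_level l) (st_level r)).+1 end.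

Fixpoint st_wf (T : stree n m) : Prop :=
  match T with
  | SLeaf _ _ _ => True
  | SNode Es bd Sp _ l r =>
      [/\ st_edges l :&: st_edges r = set0,
          st_edges l :|: st_edges r = Es,
          st_V l :&: st_V r = Sp,
          st_bd l = (bd :|: Sp) :&: st_V l &
          st_bd r = (bd :|: Sp) :&: st_V r] /\ (st_wf l /\ st_wf r)
  end.

Fixpoint in_tree (D T : stree n m) : Prop :=
  D = T \/ match T with SLeaf _ _ _ => False | SNode _ _ _ _ l r => in_tree D l \/ in_tree D r end.
Definition nonroot (D T : stree n m) : Prop :=
  match T with SLeaf _ _ _ => False | SNode _ _ _ _ l r => in_tree D l \/ in_tree D r end.

Definition st_lap (T : stree n m) : 'M[R]_n :=
  match T with
  | SLeaf Es _ _ => (incidence_on tl hd Es)^T *m Wmx w *m incidence_on tl hd Es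
  | SNode _ _ _ _ l r => st_sct l + st_sct r
  end.

Definition edge_op (D : stree n m) : 'M[R]_n := pinv (st_lap D) *m st_sct D.

Fixpoint st_M (T : stree n m) : 'M[R]_(m, n) :=
  match T with
  | SLeaf Es _ _ => Wsqrt w *m incidence_on tl hd Es
  | SNode _ _ _ _ l r => st_M l *m edge_op l + st_M r *m edge_op r
  end.

End Defs.

(* Main.v *)
Require Import Defs.
From HB Require Import structures.
From mathcomp Require Import all_boot all_order all_algebra.
From mathcomp Require classical_sets.
From mathcomp Require Import boolp reals sequences exp.
From mathcomp Require Import ring lra.
Import Order.TTheory GRing.Theory Num.Theory.
Local Open Scope ring_scope.

Section Aux.
Set Implicit Arguments.
Variable R : realType.

Lemma rv_self_eq0 k (w : 'rV[R]_k) : (w *m w^T) 0 0 = 0 -> w = 0.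
Proof.
rewrite !mxE => H.
have H2 : forall j, w 0 j * w 0 j = 0.
  move=> j; move/eqP: H; rewrite psumr_eq0.
    by move=> /allP /(_ j) /=; rewrite mem_index_enum mxE /= => /(_ isT) /eqP.
  by move=> i _; rewrite ?mxE -expr2 sqr_ge0.
apply/rowP => j; rewrite mxE; move/eqP: (H2 j); rewrite mulf_eq0 orbb => /eqP //.
Qed.

Lemma gram_unit k r (B : 'M[R]_(k, r)) : row_free B^T -> (B^T *m B) \in unitmx.
Proof.
move=> hB; rewrite -row_free_unit -kermx_eq0; apply/eqP/row_matrixP => i.
rewrite row0; set u := row i _.
have Hu : u *m (B^T *m B) = 0 by rewrite /u -row_mul mulmx_ker row0.
have Hv : u *m B^T = 0.
  apply: rv_self_eq0; rewrite trmx_mul trmxK mulmxA -(mulmxA u) Hu mul0mx mxE //.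
by apply/eqP; rewrite -(mulmx_free_eq0 _ hB); apply/eqP.
Qed.

Lemma penrose_fact n r (B : 'M[R]_(n, r)) (C : 'M[R]_(r, n)) :
  (B^T *m B) \in unitmx -> (C *m C^T) \in unitmx -> exists X, penrose (B *m C) X.
Proof.
move=> hB hC.
set P := invmx (C *m C^T); set Q := invmx (B^T *m B).
have e1 : C *m C^T *m P = 1%:M by rewrite mulmxV.
have e2 : Q *m (B^T *m B) = 1%:M by rewrite mulVmx.
have eAX : B *m C *m (C^T *m P *m Q *m B^T) = B *m Q *m B^T.
  by rewrite -!mulmxA (mulmxA C) (mulmxA (C *m C^T)) e1 mul1mx.
have eXA : (C^T *m P *m Q *m B^T) *m (B *m C) = C^T *m P *m C.
  by rewrite -!mulmxA (mulmxA B^T) (mulmxA Q) e2 mul1mx.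
have tP : P^T = P by rewrite /P trmx_inv trmx_mul trmxK.
have tQ : Q^T = Q by rewrite /Q trmx_inv trmx_mul trmxK.
exists (C^T *m P *m Q *m B^T); split.
- by rewrite eAX -!mulmxA (mulmxA B^T) (mulmxA Q) e2 mul1mx.
- by rewrite eXA -!mulmxA (mulmxA C) (mulmxA (C *m C^T)) e1 mul1mx.
- by rewrite eAX !trmx_mul trmxK tQ mulmxA.
- by rewrite eXA !trmx_mul trmxK tP mulmxA.
Qed.

Lemma penrose_ex n (A : 'M[R]_n) : exists X, penrose A X.
Proof.
have hB : ((col_base A)^T *m col_base A) \in unitmx.
  by apply: gram_unit; rewrite /row_free mxrank_tr; exact: col_base_full.
have hC : (row_base A *m (row_base A)^T) \in unitmx.
  by have := @gram_unit _ _ (row_base A)^T; rewrite trmxK; apply; exact: row_base_free.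
by have := @penrose_fact _ _ _ _ hB hC; rewrite mulmx_base.
Qed.

Lemma pinvP n (A : 'M[R]_n) : penrose A (pinv A).
Proof. by apply: classical_sets.xgetPex; exact: penrose_ex. Qed.

Lemma penrose_uniq n (A X Y : 'M[R]_n) : penrose A X -> penrose A Y -> X = Y.
Proof.
case=> [x1 x2 x3 x4] [y1 y2 y3 y4].
have eX : X = X *m A *m Y.
  have h1 : X = X *m X^T *m A^T by rewrite -{1}x2 -mulmxA -x3 trmx_mul mulmxA.
  rewrite {1}h1 -{1}y1 !trmx_mul !mulmxA -(mulmxA X X^T) -trmx_mul x3.
  rewrite -(mulmxA _ Y^T A^T) -trmx_mul y3 (mulmxA X A X) x2 mulmxA //.
have eY : Y = X *m A *m Y.
  have h1 : Y = A^T *m Y^T *m Y by rewrite -{1}y2 -y4 trmx_mul.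
  rewrite {1}h1 -{1}x1 !trmx_mul -!mulmxA (mulmxA A^T Y^T) -trmx_mul y4 y2.
  by rewrite mulmxA -trmx_mul x4 mulmxA.
by rewrite {1}eX -eY.
Qed.

Lemma pinv_sym n (A : 'M[R]_n) : A^T = A -> (pinv A)^T = pinv A.
Proof.
move=> sA; apply: (penrose_uniq _ (pinvP A)).
case: (pinvP A) => [x1 x2 x3 x4]; split.
- by have := congr1 trmx x1; rewrite !trmx_mul sA mulmxA.
- by have := congr1 trmx x2; rewrite !trmx_mul sA mulmxA.
- by rewrite trmx_mul trmxK sA -x4 trmx_mul sA.
- by rewrite trmx_mul trmxK sA -x3 trmx_mul sA.
Qed.

Definition dot n (u v : 'cV[R]_n) : R := (u^T *m v) 0 0.

Lemma qfE n (A : 'M[R]_n) x : qf A x = dot x (A *m x).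
Proof. by rewrite /qf /dot mulmxA. Qed.

Lemma dotC n (u v : 'cV[R]_n) : dot u v = dot v u.
Proof.
rewrite /dot; have -> : v^T *m u = (u^T *m v)^T by rewrite trmx_mul trmxK.
by rewrite [RHS]mxE.
Qed.

Lemma dotDr n (u v1 v2 : 'cV[R]_n) : dot u (v1 + v2) = dot u v1 + dot u v2.
Proof. by rewrite /dot mulmxDr mxE. Qed.

Lemma dotDl n (u1 u2 v : 'cV[R]_n) : dot (u1 + u2) v = dot u1 v + dot u2 v.
Proof. by rewrite dotC dotDr !(dotC v). Qed.

Lemma dotZr n a (u v : 'cV[R]_n) : dot u (a *: v) = a * dot u v.
Proof. by rewrite /dot -scalemxAr mxE. Qed.

Lemma dotZl n a (u v : 'cV[R]_n) : dot (a *: u) v = a * dot u v.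
Proof. by rewrite dotC dotZr dotC. Qed.

Lemma dotNr n (u v : 'cV[R]_n) : dot u (- v) = - dot u v.
Proof. by rewrite -scaleN1r dotZr mulN1r. Qed.

Lemma dotBr n (u v1 v2 : 'cV[R]_n) : dot u (v1 - v2) = dot u v1 - dot u v2.
Proof. by rewrite dotDr dotNr. Qed.

Lemma dotMr m n (A : 'M[R]_(m, n)) (u : 'cV[R]_m) (v : 'cV[R]_n) : dot u (A *m v) = dot (A^T *m u) v.
Proof. by rewrite /dot trmx_mul trmxK mulmxA. Qed.

Lemma dotMl m n (A : 'M[R]_(m, n)) (u : 'cV[R]_n) (v : 'cV[R]_m) : dot (A *m u) v = dot u (A^T *m v).
Proof. by rewrite dotMr trmxK. Qed.

Lemma dot_ge0 n (u : 'cV[R]_n) : 0 <= dot u u.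
Proof.
rewrite /dot mxE; apply: sumr_ge0 => i _; rewrite mxE -expr2 sqr_ge0 //.
Qed.

Lemma dot_eq0 n (u : 'cV[R]_n) : dot u u = 0 -> u = 0.
Proof.
move=> h; have : u^T = 0 by apply: rv_self_eq0; rewrite trmxK.
by move/(congr1 trmx); rewrite trmxK trmx0.
Qed.

Lemma sqnormE m (v : 'cV[R]_m) : sqnorm v = dot v v.
Proof. by rewrite /sqnorm /dot mxE; apply: eq_bigr => i _; rewrite mxE expr2. Qed.

Lemma qf_conj n (P L : 'M[R]_n) x : qf (P^T *m L *m P) x = qf L (P *m x).
Proof. by rewrite !qfE -!mulmxA dotMr trmxK. Qed.

Lemma qfD n (L : 'M[R]_n) u v : L^T = L ->
  qf L (u + v) = qf L u + 2 * dot u (L *m v) + qf L v.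
Proof.
move=> sL; rewrite !qfE mulmxDr dotDl !dotDr (dotMr L v) sL (dotC (L *m v)); lra.
Qed.

Lemma qfZ n (L : 'M[R]_n) a u : qf L (a *: u) = a ^+ 2 * qf L u.
Proof. by rewrite !qfE -scalemxAr dotZl dotZr mulrA expr2. Qed.

Lemma qfB n (L : 'M[R]_n) u v : qf (L - v) u = qf L u - qf v u.
Proof. by rewrite !qfE mulmxBl dotBr. Qed.

Lemma qfZm n (L : 'M[R]_n) a u : qf (a *: L) u = a * qf L u.
Proof. by rewrite !qfE -scalemxAl dotZr. Qed.

Lemma qfDm n (L1 L2 : 'M[R]_n) u : qf (L1 + L2) u = qf L1 u + qf L2 u.
Proof. by rewrite !qfE mulmxDl dotDr. Qed.

Lemma psd_null n (L : 'M[R]_n) v : L^T = L -> (forall y, 0 <= qf L y) ->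
  qf L v = 0 -> L *m v = 0.
Proof.
move=> sL psd h; set w := L *m v.
have hp : dot v (L *m w) = dot w w by rewrite dotMr sL.
set p := dot w w; set q := qf L w.
have H t : 0 <= 2 * t * p + t ^+ 2 * q.
  have := psd (v + t *: w); rewrite qfD // qfZ h -scalemxAr dotZr hp -/q -/p; lra.
have q0 : 0 <= q by apply: psd.
have p0 : 0 <= p by apply: dot_ge0.
have := H (- p / (q + 1)).
have q1 : q + 1 != 0 by rewrite lt0r_neq0 // ltr_pwDr.
set t := - p / (q + 1) => Ht.
have ht : t * (q + 1) = - p by rewrite /t mulfVK.
have : 0 <= (q + 1) ^+ 2 * (2 * t * p + t ^+ 2 * q) by rewrite mulr_ge0 // sqr_ge0.
have -> : (q + 1) ^+ 2 * (2 * t * p + t ^+ 2 * q) = 2 * (t * (q + 1)) * p * (q + 1) + (t * (q+1)) ^+ 2 * q by ring.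
rewrite ht => H2.
have pz : p = 0 by nra.
by apply: dot_eq0.
Qed.

Lemma lap_psd n (A : 'M[R]_n) x : is_laplacian A -> 0 <= qf A x.
Proof.
case=> sA off rs.
have sym i j : A i j = A j i by rewrite -{1}sA mxE.
have qfs : qf A x = \sum_j \sum_k x j 0 * A j k * x k 0.
  rewrite /qf mxE; under eq_bigr => k _ do rewrite mxE big_distrl /=.
  rewrite exchange_big /=; apply: eq_bigr => j _; apply: eq_bigr => k _; rewrite mxE //.
have S1 : \sum_j \sum_k A j k * x j 0 ^+ 2 = 0.
  by rewrite big1 // => j _; rewrite -big_distrl /= rs mul0r.
have S2 : \sum_j \sum_k A j k * x k 0 ^+ 2 = 0.
  rewrite exchange_big big1 // => k _; under eq_bigr do rewrite sym.
  by rewrite -big_distrl /= rs mul0r.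
have key : \sum_j \sum_k (- A j k) * (x j 0 - x k 0) ^+ 2 = 2 * qf A x.
  rewrite qfs mulr_sumr.
  transitivity (\sum_j ((\sum_k 2 * (x j 0 * A j k * x k 0)) - \sum_k A j k * x j 0 ^+ 2
                     - \sum_k A j k * x k 0 ^+ 2)).
    apply: eq_bigr => j _; rewrite -!sumrB; apply: eq_bigr => k _; ring.
  rewrite !sumrB S1 S2 !subr0; apply: eq_bigr => j _; rewrite mulr_sumr //.
have : 0 <= \sum_j \sum_k (- A j k) * (x j 0 - x k 0) ^+ 2.
  apply: sumr_ge0 => j _; apply: sumr_ge0 => k _.
  case: (eqVneq j k) => [->|jk]; first by rewrite subrr expr0n /= mulr0.
  by rewrite mulr_ge0 ?sqr_ge0 // oppr_ge0 off.
rewrite key; lra.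
Qed.


Lemma dot0l n (u : 'cV[R]_n) : dot 0 u = 0.
Proof. by rewrite /dot trmx0 mul0mx mxE. Qed.

Lemma proj_mul n k (S : {set 'I_n}) (A : 'M[R]_(n, k)) :
  proj R S *m A = \matrix_(i, j) (if i \in S then A i j else 0).
Proof.
rewrite /proj mul_diag_mx; apply/matrixP => i j; rewrite !mxE.
by case: (i \in S); rewrite ?mul1r ?mul0r.
Qed.

Lemma mul_proj n k (S : {set 'I_n}) (A : 'M[R]_(k, n)) :
  A *m proj R S = \matrix_(i, j) (if j \in S then A i j else 0).
Proof.
rewrite /proj mul_mx_diag; apply/matrixP => i j; rewrite !mxE.
by case: (j \in S); rewrite ?mulr1 ?mulr0.
Qed.

Lemma proj_tr n (S : {set 'I_n}) : (proj R S)^T = proj R S.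
Proof. exact: tr_diag_mx. Qed.

Lemma proj_idem n (S T : {set 'I_n}) : proj R S *m proj R T = proj R (S :&: T).
Proof.
rewrite proj_mul; apply/matrixP => i j; rewrite !mxE inE.
by case: (i \in S); case: (i \in T); rewrite /= ?mul0rn.
Qed.

Lemma proj_split n (U C : {set 'I_n}) : C \subset U ->
  proj R U = proj R C + proj R (U :\: C).
Proof.
move=> /subsetP hCU; apply/matrixP => i j; rewrite !mxE inE.
case hC: (i \in C); case hU: (i \in U); rewrite /= ?mul0rn ?addr0 ?add0r //.
by rewrite hCU in hU.
Qed.

Lemma supp_proj n (A : 'M[R]_n) U : supported_on A U -> proj R U *m A *m proj R U = A.
Proof.
move=> hA; rewrite proj_mul mul_proj; apply/matrixP => i j; rewrite !mxE.
case Hi: (i \in U); case Hj: (j \in U) => //; symmetry; apply: hA; rewrite ?Hi ?Hj //.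
Qed.

Lemma schur_min n (L : 'M[R]_n) (U C : {set 'I_n}) x :
  L^T = L -> (forall y, 0 <= qf L y) -> supported_on L U -> C \subset U ->
  qf (SC L U C) (proj R C *m x) <= qf L x.
Proof.
move=> sL psd hsupp hCU.
rewrite /SC /=; set F := U :\: C; set PC := proj R C; set PF := proj R F.
have tPC : PC^T = PC by exact: proj_tr.
have tPF : PF^T = PF by exact: proj_tr.
have PCC : PC *m PC = PC by rewrite /PC proj_idem setIid.
have PFF : PF *m PF = PF by rewrite /PF proj_idem setIid.
have PU : proj R U = PC + PF by exact: proj_split.
set K := PF *m L *m PF.
have tK : K^T = K by rewrite /K !trmx_mul tPF sL mulmxA.
have Kpsd y : 0 <= qf K y by rewrite /K -{1}tPF qf_conj.
set Kp := pinv K.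
have tKp : Kp^T = Kp by exact: pinv_sym.
case: (pinvP K) => k1 k2 k3 k4.
set a := PC *m x; set b := PF *m x.
have eLx : qf L x = qf L (a + b).
  have -> : qf L x = qf ((proj R U)^T *m L *m proj R U) x by rewrite proj_tr supp_proj.
  by rewrite qf_conj PU mulmxDl.
have PCa : PC *m a = a by rewrite /a mulmxA PCC.
have PFb : PF *m b = b by rewrite /b mulmxA PFF.
set g := PF *m L *m a.
have eSC : qf (PC *m L *m PC - PC *m L *m PF *m Kp *m (PF *m L *m PC)) a
           = qf L a - qf Kp g.
  rewrite qfB; congr (_ - _).
    by have := qf_conj PC L a; rewrite tPC PCa.
  have e : PC *m L *m PF = (PF *m L *m PC)^T by rewrite !trmx_mul tPC tPF sL mulmxA.
  by rewrite e qf_conj /g -mulmxA PCa mulmxA.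
have cross : dot a (L *m b) = dot b g.
  rewrite dotMr sL dotC /b /g dotMl tPF -!mulmxA; by rewrite [RHS]dotMl tPF (mulmxA PF PF) PFF.
have qb : qf L b = qf K b.
  by rewrite /K -{1}tPF qf_conj PFb.
have PFg : PF *m g = g by rewrite /g !mulmxA PFF.
have PFK : PF *m K = K by rewrite /K !mulmxA PFF.
have comm : K *m Kp = Kp *m K by rewrite -k3 trmx_mul tK tKp.
have range : K *m (Kp *m g) = g.
  set v := g - K *m (Kp *m g).
  have Kv : K *m v = 0.
    rewrite /v mulmxBr (mulmxA K K) mulmxA -(mulmxA K K Kp) comm mulmxA k1 subrr //.
  have PFv : PF *m v = v by rewrite /v mulmxBr PFg (mulmxA PF K) PFK.
  have qv : qf L v = 0 by rewrite -PFv -qf_conj tPF -/K qfE Kv /dot mulmx0 mxE.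
  have Lv : L *m v = 0 by apply: psd_null.
  have vv : dot v v = 0.
    rewrite {2}/v dotBr mulmxA dotMr trmx_mul tK tKp -mulmxA Kv mulmx0 dot0l subr0.
    by rewrite /g -mulmxA dotMr tPF PFv dotMr sL Lv dot0l.
  by apply/esym/eqP; rewrite -subr_eq0; apply/eqP; exact: dot_eq0.
set u := Kp *m g.
have hu : 0 <= qf K (b + u) by apply: Kpsd.
rewrite qfD // range in hu.
have qu : qf K u = qf Kp g by rewrite qfE range /u dotC qfE.
rewrite eSC eLx qfD // cross qb; lra.
Qed.


Lemma edge_bound n (L S : 'M[R]_n) (U C : {set 'I_n}) eps z :
  L^T = L -> (forall y, 0 <= qf L y) -> supported_on L U -> C \subset U ->
  S^T = S -> (forall y, 0 <= qf S y) -> supported_on S C ->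
  loewner_le (expR (- eps) *: S) (SC L U C) ->
  qf L (pinv L *m S *m z) <= expR eps * qf S z.
Proof.
move=> sL psdL hL hCU sS psdS hS hap.
set Lp := pinv L; set y := S *m z.
have tLp : Lp^T = Lp by exact: pinv_sym.
case: (pinvP L) => _ p2 _ _.
rewrite -mulmxA -/y; set x := Lp *m y.
have qLx : qf L x = dot y x.
  by rewrite qfE /x dotMl tLp !mulmxA p2.
set PC := proj R C; set c := PC *m x.
have tPC : PC^T = PC by exact: proj_tr.
have PCS : PC *m S = S.
  by rewrite -{1}(supp_proj hS) !mulmxA /PC proj_idem setIid supp_proj.
have yc : dot y x = dot y c.
  by rewrite /c dotMr tPC /y mulmxA PCS.
have hsch := schur_min x sL psdL hL hCU.
have hap' := hap c; rewrite qfZm in hap'.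
set D := dot z (S *m c).
have yD : dot y c = D by rewrite /y dotMl sS.
set e := expR eps; set em := expR (- eps).
have hee : em * e = 1 by rewrite /em /e -expRD addNr expR0.
have em0 : 0 < em by apply: expR_gt0.
have h := psdS (c + (- e) *: z).
rewrite qfD // qfZ -scalemxAr dotZr in h.
have cz : dot c (S *m z) = D by rewrite dotMr sS dotC.
rewrite cz in h.
have h2 := mulr_ge0 (ltW em0) h.
have E : em * (qf S c + 2 * (- e * D) + (- e) ^+ 2 * qf S z) =
          em * qf S c - 2 * (em * e) * D + (em * e) * e * qf S z by ring.
rewrite E hee !mul1r in h2.
rewrite -/c in hsch; rewrite -/em in hap'.
rewrite yc yD in qLx.
lra.
Qed.

Lemma sqnormD_orth m (u v : 'cV[R]_m) : (forall i, u i 0 * v i 0 = 0) ->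
  sqnorm (u + v) = sqnorm u + sqnorm v.
Proof.
move=> h; rewrite /sqnorm -big_split; apply: eq_bigr => i _.
by rewrite mxE sqrrD h mul0rn addr0.
Qed.

Lemma rowsupp_mul m n k (M : 'M[R]_(m, n)) (E : {set 'I_m}) (x : 'M[R]_(n, k)) e j :
  (forall e j, e \notin E -> M e j = 0) -> e \notin E -> (M *m x) e j = 0.
Proof. by move=> h he; rewrite mxE big1 // => i _; rewrite h // mul0r. Qed.

End Aux.

Section Tree.
Variables (R : realType) (n m : nat) (tl hd : 'I_m -> 'I_n) (w : 'I_m -> R).

Lemma in_tree_trans (D H T : stree R n m) : in_tree D H -> in_tree H T -> in_tree D T.
Proof.
move=> hD; elim: T => [Es bd s|Es bd Sp s l IHl r IHr] hT.
  by case: hT => [E|[]]; rewrite -E.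
case: hT => [E|[h|h]]; first by rewrite -E.
- by right; left; apply: IHl.
- by right; right; apply: IHr.
Qed.

Lemma in_tree_refl (T : stree R n m) : in_tree T T.
Proof. by case: T => *; left. Qed.

Lemma in_tree_l Es bd Sp s (l r : stree R n m) : in_tree l (SNode Es bd Sp s l r).
Proof. by right; left; apply: in_tree_refl. Qed.
Lemma in_tree_r Es bd Sp s (l r : stree R n m) : in_tree r (SNode Es bd Sp s l r).
Proof. by right; right; apply: in_tree_refl. Qed.

Lemma nonroot_l Es bd Sp s (l r T : stree R n m) :
  in_tree (SNode Es bd Sp s l r) T -> nonroot l T.
Proof.
case: T => [Es' bd' s'|Es' bd' Sp' s' l' r'] /=; first by case.
case=> [[_ _ _ _ <- _]|[h|h]]; first by left; apply: in_tree_refl.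
- by left; apply: in_tree_trans h; apply: in_tree_l.
- by right; apply: in_tree_trans h; apply: in_tree_l.
Qed.

Lemma nonroot_r Es bd Sp s (l r T : stree R n m) :
  in_tree (SNode Es bd Sp s l r) T -> nonroot r T.
Proof.
case: T => [Es' bd' s'|Es' bd' Sp' s' l' r'] /=; first by case.
case=> [[_ _ _ _ _ <-]|[h|h]]; first by right; apply: in_tree_refl.
- by left; apply: in_tree_trans h; apply: in_tree_r.
- by right; apply: in_tree_trans h; apply: in_tree_r.
Qed.

Lemma wf_sub (H T : stree R n m) : in_tree H T -> st_wf tl hd T -> st_wf tl hd H.
Proof.
elim: T => [Es bd s|Es bd Sp s l IHl r IHr] hT hw.
  by case: hT => [E|[]]; rewrite E.
case: hT => [E|[h|h]]; first by rewrite E.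
- by apply: IHl => //; case: hw => _ [].
- by apply: IHr => //; case: hw => _ [].
Qed.


Lemma main_ind (T : stree R n m) eps :
  (forall e, 0 < w e) ->
  st_wf tl hd T ->
  (forall D, in_tree D T -> laplacian_on (st_sct D) (st_bd D)) ->
  (forall H, in_tree H T ->
     conn_laplacian_on (st_lap tl hd w H) (st_bd H :|: st_F tl hd H)) ->
  0 <= eps ->
  (forall D, nonroot D T ->
     approx eps (st_sct D)
       (SC (st_lap tl hd w D) (st_bd D :|: st_F tl hd D) (st_bd D))) ->
  forall H, in_tree H T ->
    (forall e j, e \notin st_edges H -> st_M tl hd w H e j = 0) /\
    (forall z, sqnorm (st_M tl hd w H *m z)
       <= expR ((st_level H)%:R * eps) * qf (st_lap tl hd w H) z).
Proof.
move=> wpos wfT hsct hlap eps0 happ.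
elim=> [Es bd s|Es bd Sp s l IHl r IHr] hin.
  split.
    move=> e j he /=.
    by rewrite /Wsqrt mul_diag_mx mxE /incidence_on [X in _ * X]mxE (negbTE (he : e \notin Es)) mulr0.
  move=> z /=; rewrite mul0r expR0 mul1r sqnormE.
  set B := incidence_on R tl hd Es.
  have WW : (Wsqrt w)^T *m Wsqrt w = Wmx w.
    rewrite /Wsqrt tr_diag_mx mul_diag_mx /Wmx; apply/matrixP => i j; rewrite !mxE.
    case: (i == j); rewrite ?mulr0n ?mulr0 // !mulr1n -expr2 sqr_sqrtr //.
    exact: ltW.
  by rewrite -mulmxA dotMl (mulmxA _ (Wsqrt w)) WW qfE -!mulmxA (@dotMr _ _ _ B^T) trmxK.
have hinl := in_tree_trans _ _ _ (in_tree_l Es bd Sp s l r) hin.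
have hinr := in_tree_trans _ _ _ (in_tree_r Es bd Sp s l r) hin.
have [ml bl] := IHl hinl.
have [mr br] := IHr hinr.
have wfH := wf_sub _ _ hin wfT.
case: wfH => [[dis uni _ _ _] _].
have nl := @nonroot_l Es bd Sp s l r T hin.
have nr := @nonroot_r Es bd Sp s l r T hin.
split.
  move=> e j he /=; rewrite [LHS]mxE.
  move: he; rewrite /= -uni inE negb_or => /andP [hl hr].
  by rewrite (rowsupp_mul _ _ _ _ _ _ ml hl) (rowsupp_mul _ _ _ _ _ _ mr hr) addr0.
move=> z /=.
rewrite mulmxDl -(mulmxA (st_M tl hd w l)) -(mulmxA (st_M tl hd w r)).
set xl := edge_op tl hd w l *m z; set xr := edge_op tl hd w r *m z.
rewrite sqnormD_orth; last first.
  move=> i; case: (boolP (i \in st_edges l)) => hi.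
    have : i \in st_edges l :&: st_edges r = false by rewrite dis inE.
    rewrite inE hi /= => /negbT hr.
    by rewrite (rowsupp_mul _ _ _ _ _ _ mr hr) mulr0.
  by rewrite (rowsupp_mul _ _ _ _ _ _ ml hi) mul0r.
have bound (D : stree R n m) : in_tree D T -> nonroot D T ->
    qf (st_lap tl hd w D) (edge_op tl hd w D *m z) <= expR eps * qf (st_sct D) z
    /\ 0 <= qf (st_lap tl hd w D) (edge_op tl hd w D *m z).
  move=> hD nD.
  have [[lapL suppL] _] := hlap D hD.
  have [lapS suppS] := hsct D hD.
  case: (lapL) => sL _ _; case: (lapS) => sS _ _.
  split; last exact: lap_psd.
  rewrite /edge_op; apply: (edge_bound eps z sL _ suppL _ sS _ suppS (happ D nD).1).
  - by move=> y; apply: lap_psd.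
  - exact: subsetUl.
  - by move=> y; apply: lap_psd.
have [el ql] := bound l hinl nl.
have [er qr] := bound r hinr nr.
set E := expR ((maxn (st_level l) (st_level r))%:R * eps).
have hE : expR (((maxn (st_level l) (st_level r)).+1)%:R * eps) = E * expR eps.
  by rewrite -addn1 natrD mulrDl mul1r expRD.
have hEl : expR ((st_level l)%:R * eps) <= E.
  by rewrite ler_expR ler_wpM2r // ler_nat leq_maxl.
have hEr : expR ((st_level r)%:R * eps) <= E.
  by rewrite ler_expR ler_wpM2r // ler_nat leq_maxr.
have E0 : 0 <= E by apply: expR_ge0.
have l1 := le_trans (bl xl) (le_trans (ler_wpM2r ql hEl) (ler_wpM2l E0 el)).
have r1 := le_trans (br xr) (le_trans (ler_wpM2r qr hEr) (ler_wpM2l E0 er)).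
rewrite hE qfDm.
lra.
Qed.

End Tree.


Theorem mainTheorem12 (R : realType) (n m : nat) (tl hd : 'I_m -> 'I_n)
    (w : 'I_m -> R) (T : stree R n m) (eps : R) :
  (* G = (V,E) connected, no self-loops, positive weights *)
  (forall e, tl e != hd e) ->
  graph_connected tl hd ->
  (forall e, 0 < w e) ->
  (* T is a separator tree of G *)
  st_edges T = [set: 'I_m] ->
  st_bd T = set0 ->
  st_wf tl hd T ->
  (* the given SC~(L^(D), dD) are Laplacians supported on dD *)
  (forall D, in_tree D T -> laplacian_on (st_sct D) (st_bd D)) ->
  (* each L^(H) is the Laplacian of a connected graph on dH u F_H *)
  (forall H, in_tree H T ->
     conn_laplacian_on (st_lap tl hd w H) (st_bd H :|: st_F tl hd H)) ->
  0 <= eps ->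
  (* SC~(L^(D), dD) ~_eps SC(L^(D), dD) for every non-root node D *)
  (forall D, nonroot D T ->
     approx eps (st_sct D)
       (SC (st_lap tl hd w D) (st_bd D :|: st_F tl hd D) (st_bd D))) ->
  forall H, in_tree H T ->
  forall z : 'cV[R]_n,
    sqnorm (st_M tl hd w H *m z)
      <= expR ((st_level H)%:R * eps) * qf (st_lap tl hd w H) z
    /\ qf (st_lap tl hd w H) z = energy (st_lap tl hd w H) (st_lap tl hd w H *m z).
Proof.
move=> _ _ wpos _ _ wfT hsct hlap eps0 happ H hin z.
have [_ b] := @main_ind R n m tl hd w T eps wpos wfT hsct hlap eps0 happ H hin.
split; first exact: b.
have [[[sL _ _] _] _] := hlap H hin.
rewrite /energy !qfE dotMl sL !mulmxA.
by case: (@pinvP R _ (st_lap tl hd w H)) => ->.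
Qed.
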